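(* Let $\alpha\ge1$ and $p$ be integers with $1\le p\le\alpha^2$, and let $c$ be real with $1\le c\le p\gamma/\alpha$. Then, as $r\to\infty$, $$n_{c,r}^{-1}|S_p\cap[n_{c,r}]|=\tfrac12 c^{-1}\left(1-(\alpha\gamma)^{-1}p\right)^2+O(\gamma^{-r}).$$ In particular, for $p=\alpha^2$ and $1\le c\le\alpha\gamma$, $$n_{c,r}^{-1}|S_p\cap[n_{c,r}]|=\tfrac12c^{-1}\gamma^{-4}+O(\gamma^{-r}).$$
   Context: Here $\beta=1$. For a positive integer $\alpha$ and positive integers $a_1,a_2$, the $(\alpha,1)$-walk $w_k(a_1,a_2)$ is given by $w_1=a_1$, $w_2=a_2$, $w_{k+2}=\alpha w_{k+1}+w_k$ ($k\ge1$). For a positive integer $n$, $s(n;a_1,a_2)$ is the (largest) index $s$ with $w_s(a_1,a_2)=n$ ($-\infty$ if none), and $s(n)=\max_{a_1,a_2\ge1}s(n;a_1,a_2)$. A pair of positive integers $(a_1,a_2)$ is $n$-good if $s(n;a_1,a_2)=s(n)$; $p(n)$ is the number of $n$-good pairs (possibly infinite). $S_p=\{m\ge1:p(m)>p\}$. Let $\gamma=\frac12(\alpha+\sqrt{\alpha^2+4})$, $\lambda=\frac12(\alpha-\sqrt{\alpha^2+4})$, and $n_{c,r}=\left\lfloor\frac{c}{(\gamma-\lambda)^2}\gamma^{2r+1}\right\rfloor$. $[N]=\{1,\dots,N\}$. *)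

(* Defs.v *)
From Stdlib Require Import Reals Lra Lia List ClassicalEpsilon.
Import ListNotations.
Open Scope R_scope.

(* Pair (w_{k+1}, w_{k+2}) of the (alpha,1)-walk started at (a1,a2). *)
Fixpoint wpair (alpha a1 a2 : nat) (k : nat) : nat * nat :=
  match k with
  | O => (a1, a2)
  | S k' => let (x, y) := wpair alpha a1 a2 k' in (y, (alpha * y + x)%nat)
  end.

Definition walk (alpha a1 a2 k : nat) : nat := fst (wpair alpha a1 a2 (k - 1)).

(* (a1,a2) is n-good : s(n;a1,a2) = s(n), i.e. the largest index s with
   w_s(a1,a2) = n exists and is >= every index j with w_j(b1,b2) = n for
   any positive b1, b2. *)
Definition good (alpha n a1 a2 : nat) : Prop :=
  (1 <= a1)%nat /\ (1 <= a2)%nat /\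
  exists k, (1 <= k)%nat /\ walk alpha a1 a2 k = n /\
    forall b1 b2 j, (1 <= b1)%nat -> (1 <= b2)%nat -> (1 <= j)%nat ->
      walk alpha b1 b2 j = n -> (j <= k)%nat.

(* m \in S_p  <->  m >= 1 and p(m) > p, i.e. there are at least p+1
   distinct m-good pairs (p(m) may be infinite). *)
Definition in_Sp (alpha p m : nat) : Prop :=
  (1 <= m)%nat /\
  exists l : list (nat * nat), NoDup l /\ length l = S p /\
    Forall (fun ab => good alpha m (fst ab) (snd ab)) l.

Definition in_Sp_b (alpha p m : nat) : bool :=
  if excluded_middle_informative (in_Sp alpha p m) then true else false.

Definition count_Sp (alpha p N : nat) : nat :=
  length (filter (in_Sp_b alpha p) (seq 1 N)).

Definition gamma (alpha : nat) : R :=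
  (INR alpha + sqrt (INR alpha ^ 2 + 4)) / 2.
Definition lambda (alpha : nat) : R :=
  (INR alpha - sqrt (INR alpha ^ 2 + 4)) / 2.

Definition ncr (alpha : nat) (c : R) (r : nat) : nat :=
  Z.to_nat (Int_part (c / (gamma alpha - lambda alpha) ^ 2
                        * gamma alpha ^ (2 * r + 1))).

(* Main.v *)
Require Import Defs.
From Stdlib Require Import Reals.
From Stdlib Require Import Lra Lia List ZArith.
Import ListNotations.
Open Scope R_scope.

Open Scope R_scope.

Fixpoint U (al m : nat) : nat :=
  match m with
  | O => O
  | S m1 => match m1 with
            | O => 1%nat
            | S m2 => (al * U al m1 + U al m2)%nat
            end
  end.

Definition Vv (al j : nat) : nat := match j with O => 1%nat | S j' => U al j' end.

Lemma U_SS al m : U al (S (S m)) = (al * U al (S m) + U al m)%nat.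
Proof. reflexivity. Qed.

Lemma U_rec al j : U al (S j) = (al * U al j + Vv al j)%nat.
Proof. destruct j; simpl; lia. Qed.

Lemma wpair_formula al a1 a2 j :
  wpair al a1 a2 j = ((a1 * Vv al j + a2 * U al j)%nat, (a1 * U al j + a2 * U al (S j))%nat).
Proof.
  induction j as [|j IH].
  - simpl. f_equal; lia.
  - simpl wpair. rewrite IH. f_equal.
    all: simpl Vv; rewrite ?(U_SS al j); rewrite ?(U_rec al j); ring.
Qed.

Lemma walkS al a1 a2 j : walk al a1 a2 (S j) = (a1 * Vv al j + a2 * U al j)%nat.
Proof. unfold walk. replace (S j - 1)%nat with j by lia. rewrite wpair_formula. reflexivity. Qed.

Lemma walk3 al a1 a2 i : walk al a1 a2 (i+3) = (a1 * U al (S i) + a2 * U al (S (S i)))%nat.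
Proof. replace (i+3)%nat with (S (S (S i))) by lia. rewrite walkS. reflexivity. Qed.

Lemma wpair_shift al a1 a2 j : wpair al a1 a2 (S j) = wpair al a2 (al*a2+a1) j.
Proof. induction j as [|j IH]; [reflexivity|]. change (wpair al a1 a2 (S (S j))) with
  (let (x,y) := wpair al a1 a2 (S j) in (y, (al*y+x)%nat)). rewrite IH. reflexivity. Qed.

Lemma walk_shift al a1 a2 j : walk al a1 a2 (S (S j)) = walk al a2 (al*a2+a1) (S j).
Proof. unfold walk. replace (S (S j) - 1)%nat with (S j) by lia. replace (S j - 1)%nat with j by lia.
  rewrite wpair_shift. reflexivity. Qed.

Lemma U_pos al m : (1 <= al)%nat -> (1 <= m)%nat -> (1 <= U al m)%nat.
Proof. intros Ha. induction m as [m IH] using lt_wf_ind. intros Hm.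
  destruct m as [|[|m]]; [lia|simpl; lia|]. rewrite U_SS.
  assert (1 <= U al (S m))%nat by (apply IH; lia). nia. Qed.

Lemma U_mono_S al m : (1 <= al)%nat -> (U al m <= U al (S m))%nat.
Proof. intros Ha. destruct m as [|m]; [simpl; lia|]. rewrite U_SS. nia. Qed.

Lemma U_mono al m n : (1 <= al)%nat -> (m <= n)%nat -> (U al m <= U al n)%nat.
Proof. intros Ha H. induction H; [lia|]. pose proof (U_mono_S al m0 Ha). lia. Qed.

Lemma U_ge al m : (1 <= al)%nat -> (m <= U al (S m) + 1)%nat.
Proof. intros Ha. induction m as [m IH] using lt_wf_ind.
  destruct m as [|[|m]]; [lia| simpl; lia|]. rewrite U_SS.
  assert (S m <= U al (S (S m)) + 1)%nat by (apply IH; lia).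
  assert (1 <= U al (S m))%nat by (apply U_pos; lia). nia. Qed.

Lemma descend al b1 b2 j m n : (1 <= b1)%nat -> (1 <= b2)%nat -> (1 <= m)%nat -> (m <= j)%nat ->
  walk al b1 b2 j = n -> exists c1 c2, (1 <= c1)%nat /\ (1 <= c2)%nat /\ walk al c1 c2 m = n.
Proof.
  intros H1 H2 Hm Hj. revert b1 b2 H1 H2. induction Hj as [|j Hj IH]; intros b1 b2 H1 H2 Hw.
  - exists b1, b2; auto.
  - destruct j as [|j]; [lia|]. rewrite walk_shift in Hw.
    apply (IH b2 (al*b2+b1)%nat); auto; lia.
Qed.

Lemma gensol al m (x y : Z) :
  (x * Z.of_nat (U al m) + y * Z.of_nat (U al (S m)) = 0)%Z ->
  exists t, x = (t * Z.of_nat (U al (S m)))%Z /\ y = (- t * Z.of_nat (U al m))%Z.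
Proof.
  revert x y. induction m as [|m IH]; intros x y H.
  - simpl in *. exists x. lia.
  - rewrite U_SS in H. rewrite Nat2Z.inj_add, Nat2Z.inj_mul in H.
    destruct (IH y (x + Z.of_nat al * y)%Z) as [t [Ht1 Ht2]].
    + nia.
    + exists (-t)%Z. rewrite U_SS, Nat2Z.inj_add, Nat2Z.inj_mul. split; nia.
Qed.

Open Scope R_scope.
Open Scope R_scope.

Definition Tri (al p i a b : nat) : Prop :=
  (1 <= a <= U al (S (S i)))%nat /\ (p * U al (S i) + 1 <= b <= al * a)%nat.
Definition val (al i a b : nat) : nat := (a * U al (S i) + b * U al (S (S i)))%nat.

Lemma same_level al i a b c d :
  (a * U al (S i) + b * U al (S (S i)) = c * U al (S i) + d * U al (S (S i)))%nat ->
  exists t, (Z.of_nat c - Z.of_nat a = t * Z.of_nat (U al (S (S i))))%Z /\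
            (Z.of_nat d - Z.of_nat b = - t * Z.of_nat (U al (S i)))%Z.
Proof.
  intros H. apply (gensol al (S i)).
  apply (f_equal Z.of_nat) in H. rewrite !Nat2Z.inj_add, !Nat2Z.inj_mul in H. lia.
Qed.

Lemma max_index al p i a b c1 c2 j : (1 <= al)%nat -> Tri al p i a b ->
  (1 <= c1)%nat -> (1 <= c2)%nat -> (1 <= j)%nat -> walk al c1 c2 j = val al i a b ->
  (j <= i + 3)%nat.
Proof.
  intros Hal [Ha Hb] H1 H2 Hj Hw.
  destruct (Nat.le_gt_cases j (i+3)) as [|Hlt]; [assumption|exfalso].
  destruct (descend al c1 c2 j (i+4) _ H1 H2 ltac:(lia) ltac:(lia) Hw) as [d1 [d2 [Hd1 [Hd2 Hw2]]]].
  replace (i+4)%nat with (S (S (i+2))) in Hw2 by lia. rewrite walk_shift in Hw2.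
  replace (S (i+2)) with (i+3)%nat in Hw2 by lia. rewrite walk3 in Hw2. unfold val in Hw2.
  destruct (same_level al i d2 (al*d2+d1) a b) as [t [Ht1 Ht2]]; [lia|].
  assert (HA := U_pos al (S i) Hal ltac:(lia)). assert (HB := U_pos al (S (S i)) Hal ltac:(lia)).
  rewrite Nat2Z.inj_add, Nat2Z.inj_mul in Ht2.
  destruct (Z.le_gt_cases t 0) as [Ht|Ht].
  - assert (t * Z.of_nat (U al (S i)) <= 0)%Z by nia.
    assert (t * Z.of_nat (U al (S (S i))) <= 0)%Z by nia.
    assert (Z.of_nat a <= Z.of_nat d2)%Z by lia.
    assert (Z.of_nat al * Z.of_nat a <= Z.of_nat al * Z.of_nat d2)%Z by nia.
    assert (Z.of_nat b <= Z.of_nat al * Z.of_nat a)%Z by lia. lia.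
  - assert (t * Z.of_nat (U al (S (S i))) >= Z.of_nat (U al (S (S i))))%Z by nia. lia.
Qed.

Lemma val_walk al i a b : walk al a b (i+3) = val al i a b.
Proof. rewrite walk3. reflexivity. Qed.

Lemma tri_val_gt al p i a b : (1 <= al)%nat -> Tri al p i a b -> (al < val al i a b)%nat.
Proof. intros Hal [Ha Hb]. unfold val.
  assert (HA := U_pos al (S i) Hal ltac:(lia)).
  assert (U al (S (S i)) >= al)%nat. { rewrite U_SS. nia. } nia. Qed.

Lemma tri_in_Sp al p i a b : (1 <= al)%nat -> Tri al p i a b -> in_Sp al p (val al i a b).
Proof.
  intros Hal HT. pose proof (tri_val_gt _ _ _ _ _ Hal HT). destruct HT as [Ha Hb].
  assert (HA := U_pos al (S i) Hal ltac:(lia)). assert (HB := U_pos al (S (S i)) Hal ltac:(lia)).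
  split; [lia|].
  exists (map (fun t => ((a + t * U al (S (S i)))%nat, (b - t * U al (S i))%nat)) (seq 0 (S p))).
  split; [|split].
  - apply NoDup_map_NoDup_ForallPairs; [|apply seq_NoDup].
    intros x y _ _ E. pose proof (f_equal fst E) as E1. cbn [fst] in E1. apply Nat.add_cancel_l in E1.
    apply Nat.mul_cancel_r in E1; lia.
  - rewrite length_map, length_seq. reflexivity.
  - apply Forall_forall. intros [x y] Hin. apply in_map_iff in Hin.
    destruct Hin as [t [Et Hint]]. apply in_seq in Hint. apply pair_equal_spec in Et; destruct Et as [<- <-]; unfold good; cbn [fst snd].
    assert (t * U al (S i) <= p * U al (S i))%nat by nia.
     split; [lia|]. split; [lia|]. exists (i+3)%nat. split; [lia|]. split.
    + rewrite walk3. unfold val. rewrite Nat.mul_sub_distr_r. nia.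
    + intros b1 b2 j Hb1 Hb2 Hj Hw. apply (max_index al p i a b b1 b2 j); auto. split; auto.
Qed.

Lemma tri_unique al p i a b i' a' b' : (1 <= al)%nat -> Tri al p i a b -> Tri al p i' a' b' ->
  val al i a b = val al i' a' b' -> i = i' /\ a = a' /\ b = b'.
Proof.
  intros Hal H1 H2 E.
  pose proof H1 as [Ha1 Hb1]. pose proof H2 as [Ha2 Hb2].
  assert (i' + 3 <= i + 3)%nat.
  { apply (max_index al p i a b a' b' (i'+3)); auto; try lia. rewrite val_walk. auto. }
  assert (i + 3 <= i' + 3)%nat.
  { apply (max_index al p i' a' b' a b (i+3)); auto; try lia. rewrite val_walk. auto. }
  assert (i = i') by lia. subst i'. split; auto. unfold val in E.
  destruct (same_level al i a b a' b' E) as [t [Ht1 Ht2]].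
  destruct H1 as [Ha Hb], H2 as [Ha' Hb'].
  assert (HB := U_pos al (S (S i)) Hal ltac:(lia)).
  assert (t = 0)%Z.
  { destruct (Z.le_gt_cases t 0); destruct (Z.le_gt_cases 0 t); try lia; nia. }
  subst t. lia.
Qed.

Lemma small_in_Sp al p m : (1 <= al)%nat -> (1 <= m <= al)%nat -> in_Sp al p m.
Proof.
  intros Hal Hm. split; [lia|].
  exists (map (fun t => (S t, m)) (seq 0 (S p))). split; [|split].
  - apply NoDup_map_NoDup_ForallPairs; [|apply seq_NoDup]. intros x y _ _ E. injection E; lia.
  - rewrite length_map, length_seq. reflexivity.
  - apply Forall_forall. intros [x y] Hin. apply in_map_iff in Hin.
    destruct Hin as [t [Et _]]. apply pair_equal_spec in Et; destruct Et as [<- <-]; unfold good; cbn [fst snd].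
    split; [lia|]. split; [lia|]. exists 2%nat. split; [lia|]. split.
    + rewrite walkS. simpl. lia.
    + intros b1 b2 j Hb1 Hb2 Hj Hw.
      destruct (Nat.le_gt_cases j 2) as [|Hj3]; [assumption|exfalso].
      destruct (descend al b1 b2 j 3 _ Hb1 Hb2 ltac:(lia) ltac:(lia) Hw) as [d1 [d2 [Hd1 [Hd2 Hw2]]]].
      rewrite walkS in Hw2. simpl in Hw2. nia.
Qed.

Open Scope R_scope.
Open Scope nat_scope.

Lemma same_level_nat al i a b c d : (1 <= al)%nat -> (1 <= c)%nat -> (a <= U al (S (S i)))%nat ->
  (a * U al (S i) + b * U al (S (S i)) = c * U al (S i) + d * U al (S (S i)))%nat ->
  exists t, c = (a + t * U al (S (S i)))%nat /\ (d + t * U al (S i) = b)%nat.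
Proof.
  intros Hal Hc Ha E. destruct (same_level al i a b c d E) as [t [H1 H2]].
  assert (HB := U_pos al (S (S i)) Hal ltac:(lia)).
  assert (0 <= t)%Z.
  { destruct (Z.le_gt_cases 0 t); auto.
    assert (t * Z.of_nat (U al (S (S i))) <= - Z.of_nat (U al (S (S i))))%Z by nia. lia. }
  exists (Z.to_nat t). split.
  - apply Nat2Z.inj. rewrite Nat2Z.inj_add, Nat2Z.inj_mul, Z2Nat.id; lia.
  - apply Nat2Z.inj. rewrite Nat2Z.inj_add, Nat2Z.inj_mul, Z2Nat.id; lia.
Qed.

Lemma sp_tri al p m : (1 <= al)%nat -> (al < m)%nat -> in_Sp al p m ->
  exists i a b, Tri al p i a b /\ val al i a b = m.
Proof.
  intros Hal Hm [_ [l [Hnd [Hlen Hall]]]].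
  destruct l as [|[a1 a2] l']; [simpl in Hlen; discriminate|].
  pose proof (Forall_inv Hall) as [Ha1 [Ha2 [k [Hk [Hw Hmax]]]]]. cbn [fst snd] in *.
  assert (Hk3 : (3 <= k)%nat).
  { apply (Hmax (m - al)%nat 1%nat 3%nat); try lia. rewrite walkS. simpl. lia. }
  destruct (Nat.le_exists_sub 3 k Hk3) as [i [Hi _]]. subst k.
  set (L := (a1,a2) :: l') in *.
  assert (HL : forall c, In c L -> (1 <= fst c)%nat /\ (1 <= snd c)%nat /\
                 (fst c * U al (S i) + snd c * U al (S (S i)) = m)%nat).
  { intros [c1 c2] Hc. rewrite Forall_forall in Hall. specialize (Hall _ Hc).
    destruct Hall as [Hc1 [Hc2 [k' [Hk' [Hw' Hmax']]]]]. cbn [fst snd] in *.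
    assert (k' <= i + 3)%nat by (apply (Hmax c1 c2); auto).
    assert (i + 3 <= k')%nat by (apply (Hmax' a1 a2); auto; lia).
    replace k' with (i+3)%nat in Hw' by lia. rewrite walk3 in Hw'. auto. }
  assert (Hno : forall d1 d2, (1 <= d1)%nat -> (1 <= d2)%nat ->
                 (d2 * U al (S i) + (al * d2 + d1) * U al (S (S i)) <> m)%nat).
  { intros d1 d2 H1 H2 E.
    assert (i + 4 <= i + 3)%nat; [|lia].
    apply (Hmax d1 d2); auto; try lia.
    replace (i+4)%nat with (S (S (i+2))) by lia. rewrite walk_shift.
    replace (S (i+2)) with (i+3)%nat by lia. rewrite walk3. auto. }
  assert (HA := U_pos al (S i) Hal ltac:(lia)). assert (HB := U_pos al (S (S i)) Hal ltac:(lia)).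
  destruct (HL (a1,a2) (or_introl eq_refl)) as [_ [_ Hm1]]. cbn [fst snd] in Hm1.
  set (A := U al (S i)) in *. set (B := U al (S (S i))) in *.
  set (q := ((a1 - 1) / B)%nat). set (rr := ((a1 - 1) mod B)%nat).
  assert (Hdm : (a1 - 1 = B * q + rr)%nat) by (apply Nat.div_mod; lia).
  assert (Hrr : (rr < B)%nat) by (apply Nat.mod_upper_bound; lia).
  set (a0 := (rr + 1)%nat). set (b0 := (a2 + q * A)%nat).
  assert (Hv : (a0 * A + b0 * B = m)%nat) by (unfold a0, b0; nia).
  assert (Hb0 : (b0 <= al * a0)%nat).
  { destruct (Nat.le_gt_cases b0 (al * a0)) as [|Hgt]; auto. exfalso.
    apply (Hno (b0 - al * a0)%nat a0); try lia.
    all: try (replace (al * a0 + (b0 - al * a0))%nat with b0 by lia; auto). }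
  assert (Hrep : forall c, In c L -> exists t, fst c = (a0 + t * B)%nat /\ (snd c + t * A = b0)%nat).
  { intros c Hc. destruct (HL c Hc) as [Hc1 [Hc2 Hcm]].
    apply (same_level_nat al i a0 b0 (fst c) (snd c)); auto; unfold a0; try lia.
    }
  set (T := map (fun c => ((fst c - a0) / B)%nat) L).
  assert (HT : forall c, In c L -> exists t, (fst c - a0) / B = t /\ fst c = (a0 + t * B)%nat /\ (snd c + t * A = b0)%nat).
  { intros c Hc. destruct (Hrep c Hc) as [t [E1 E2]]. exists t. split; auto.
    rewrite E1. replace (a0 + t * B - a0)%nat with (t * B)%nat by lia. apply Nat.div_mul. lia. }
  assert (HndT : NoDup T).
  { apply NoDup_map_NoDup_ForallPairs; auto. intros [x1 x2] [y1 y2] Hx Hy E.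
    destruct (HT _ Hx) as [t [Et [E1 E2]]]. destruct (HT _ Hy) as [t' [Et' [E1' E2']]].
    cbn [fst snd] in *. rewrite Et, Et' in E. subst t'. f_equal; lia. }
  assert (Hinc : incl T (seq 0 ((b0 - 1) / A + 1))).
  { intros x Hx. unfold T in Hx. apply in_map_iff in Hx. destruct Hx as [c [Ec Hc]].
    destruct (HT c Hc) as [t [Et [E1 E2]]]. rewrite Et in Ec. subst x.
    destruct (HL c Hc) as [_ [Hc2 _]].
    apply in_seq. split; [lia|]. assert (t <= (b0 - 1) / A)%nat; [|lia].
    apply Nat.div_le_lower_bound; lia. }
  pose proof (NoDup_incl_length HndT Hinc) as Hle. unfold T in Hle; rewrite length_map, length_seq in Hle.
  rewrite Hlen in Hle.
  assert (p * A <= b0 - 1)%nat.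
  { assert (p <= (b0 - 1) / A)%nat by lia.
    assert (A * ((b0 - 1) / A) <= b0 - 1)%nat by (apply Nat.mul_div_le; lia). nia. }
  exists i, a0, b0. split.
  - unfold Tri. fold A B. unfold a0. split; lia.
  - unfold val. fold A B. auto.
Qed.

Open Scope R_scope.
Open Scope nat_scope.

Fixpoint LevA (al p i B : nat) : list (nat * nat * nat) :=
  match B with
  | O => []
  | S B' => LevA al p i B' ++ map (fun b => (i, S B', b)) (seq (p * U al (S i) + 1) (al * S B' - p * U al (S i)))
  end.

Fixpoint AllL (al p n : nat) : list (nat * nat * nat) :=
  match n with
  | O => []
  | S n' => AllL al p n' ++ LevA al p n' (U al (S (S n')))
  end.

Fixpoint Fs (al P B : nat) : nat :=
  match B with O => O | S B' => Fs al P B' + (al * S B' - P) end.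

Fixpoint Tot (al p n : nat) : nat :=
  match n with O => O | S n' => Tot al p n' + Fs al (p * U al (S n')) (U al (S (S n'))) end.

Definition val3 (al : nat) (t : nat * nat * nat) : nat :=
  let '(i, a, b) := t in val al i a b.

Lemma in_LevA al p i B i' a b :
  In (i', a, b) (LevA al p i B) <-> i' = i /\ 1 <= a <= B /\ p * U al (S i) + 1 <= b <= al * a.
Proof.
  induction B as [|B IH]; cbn [LevA].
  - simpl; split; [tauto|lia].
  - rewrite in_app_iff, IH, in_map_iff. split.
    + intros [H|[x [Ex Hx]]]; [lia|]. apply in_seq in Hx. injection Ex as <- <- <-. lia.
    + intros [-> [Ha Hb]]. destruct (Nat.eq_dec a (S B)) as [->|Hne]; [|left; lia].
      right. exists b. split; [reflexivity|]. apply in_seq. lia.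
Qed.

Lemma len_LevA al p i B : length (LevA al p i B) = Fs al (p * U al (S i)) B.
Proof. induction B as [|B IH]; cbn [LevA]; [reflexivity|]. rewrite length_app, IH, length_map, length_seq. reflexivity. Qed.

Lemma NoDup_LevA al p i B : NoDup (LevA al p i B).
Proof.
  induction B as [|B IH]; cbn [LevA]; [constructor|]. apply NoDup_app; auto.
  - apply NoDup_map_NoDup_ForallPairs; [|apply seq_NoDup]. intros x y _ _ E. injection E; auto.
  - intros [[i' a] b] H1 H2. apply in_LevA in H1. apply in_map_iff in H2.
    destruct H2 as [x [Ex _]]. injection Ex. lia.
Qed.

Lemma in_AllL al p n i a b :
  In (i, a, b) (AllL al p n) <-> i < n /\ Tri al p i a b.
Proof.
  unfold Tri. induction n as [|n IH]; cbn [AllL].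
  - simpl; split; [tauto|lia].
  - rewrite in_app_iff, IH, in_LevA. split.
    + intros [H|[-> H]]; [lia|]. split; [lia|exact H].
    + intros [Hi H]. destruct (Nat.eq_dec i n) as [->|]; [right; split; [reflexivity|exact H]|left; lia].
Qed.

Lemma len_AllL al p n : length (AllL al p n) = Tot al p n.
Proof. induction n as [|n IH]; cbn [AllL]; [reflexivity|]. rewrite length_app, IH, len_LevA. reflexivity. Qed.

Lemma NoDup_AllL al p n : NoDup (AllL al p n).
Proof.
  induction n as [|n IH]; cbn [AllL]; [constructor|]. apply NoDup_app; auto. apply NoDup_LevA.
  intros [[i a] b] H1 H2. apply in_AllL in H1. apply in_LevA in H2. lia.
Qed.

Lemma in_Sp_b_iff al p m : in_Sp_b al p m = true <-> in_Sp al p m.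
Proof. unfold in_Sp_b. destruct (ClassicalEpsilon.excluded_middle_informative _); split; auto; discriminate. Qed.

Lemma NoDup_val3 al p l : 1 <= al -> NoDup l -> (forall i a b, In (i,a,b) l -> Tri al p i a b) ->
  NoDup (map (val3 al) l).
Proof.
  intros Hal Hnd HT. apply NoDup_map_NoDup_ForallPairs; auto.
  intros [[i a] b] [[i' a'] b'] H1 H2 E. simpl in E.
  destruct (tri_unique al p i a b i' a' b' Hal (HT _ _ _ H1) (HT _ _ _ H2) E) as [-> [-> ->]]. reflexivity.
Qed.

Lemma count_upper al p N s : 1 <= al ->
  (forall i a b, Tri al p i a b -> s < i -> N < val al i a b) ->
  count_Sp al p N <= al + Tot al p (S s).
Proof.
  intros Hal Hhi. unfold count_Sp.
  transitivity (length (seq 1 al ++ map (val3 al) (AllL al p (S s)))).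
  2:{ rewrite length_app, length_seq, length_map, len_AllL. lia. }
  apply NoDup_incl_length. apply NoDup_filter, seq_NoDup.
  intros m Hm. apply filter_In in Hm. destruct Hm as [Hm Hsp]. apply in_seq in Hm.
  apply in_Sp_b_iff in Hsp. apply in_app_iff.
  destruct (Nat.le_gt_cases m al) as [Hle|Hgt].
  - left. apply in_seq. lia.
  - right. destruct (sp_tri al p m Hal Hgt Hsp) as [i [a [b [HT Hv]]]].
    apply in_map_iff. exists (i,a,b). split; auto. apply in_AllL. split; auto.
    destruct (Nat.le_gt_cases i s); [lia|]. specialize (Hhi i a b HT ltac:(lia)). lia.
Qed.

Lemma count_lower al p N s : 1 <= al -> al <= N ->
  (forall i a b, Tri al p i a b -> (i < s \/ (i = s /\ a < U al (S (S s)))) -> val al i a b <= N) ->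
  al + Tot al p s + Fs al (p * U al (S s)) (U al (S (S s)) - 1) <= count_Sp al p N.
Proof.
  intros Hal HN Hlo. unfold count_Sp.
  transitivity (length (seq 1 al ++ map (val3 al) (AllL al p s ++ LevA al p s (U al (S (S s)) - 1)))).
  { rewrite length_app, length_seq, length_map, length_app, len_AllL, len_LevA. lia. }
  apply NoDup_incl_length.
  - apply NoDup_app.
    + apply seq_NoDup.
    + apply NoDup_val3 with p; auto.
      * apply NoDup_app; [apply NoDup_AllL|apply NoDup_LevA|].
        intros [[i a] b] H1 H2. apply in_AllL in H1. apply in_LevA in H2. lia.
      * intros i a b H. apply in_app_iff in H. destruct H as [H|H].
        -- apply in_AllL in H. tauto.
        -- apply in_LevA in H. destruct H as [-> H]. unfold Tri. lia.
    + intros m H1 H2. apply in_seq in H1. apply in_map_iff in H2. destruct H2 as [[[i a] b] [E H]].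
      simpl in E. assert (Tri al p i a b).
      { apply in_app_iff in H. destruct H as [H|H]. apply in_AllL in H; tauto. apply in_LevA in H. destruct H as [-> H]. unfold Tri. lia. }
      pose proof (tri_val_gt al p i a b Hal H0). lia.
  - intros m Hm. apply filter_In. apply in_app_iff in Hm. destruct Hm as [Hm|Hm].
    + apply in_seq in Hm. split; [apply in_seq; lia|]. apply in_Sp_b_iff. apply small_in_Sp; lia.
    + apply in_map_iff in Hm. destruct Hm as [[[i a] b] [E H]]. simpl in E. subst m.
      assert (HT : Tri al p i a b /\ (i < s \/ (i = s /\ a < U al (S (S s))))).
      { apply in_app_iff in H. destruct H as [H|H]. apply in_AllL in H; tauto.
        apply in_LevA in H. destruct H as [-> H]. unfold Tri. lia. }
      destruct HT as [HT Hr]. pose proof (tri_val_gt al p i a b Hal HT).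
      specialize (Hlo i a b HT Hr). split; [apply in_seq; lia|]. apply in_Sp_b_iff. apply tri_in_Sp; auto.
Qed.

Open Scope R_scope.
Open Scope R_scope.

Section G.
Variable al : nat.
Hypothesis Hal : (1 <= al)%nat.
Let a := INR al.
Let g := gamma al.
Let l := lambda al.

Lemma a_ge1 : 1 <= a.
Proof. unfold a. apply (le_INR 1). exact Hal. Qed.

Let sq := sqrt (a ^ 2 + 4).
Lemma sq_sq : sq * sq = a ^ 2 + 4.
Proof. unfold sq. apply sqrt_sqrt. pose proof a_ge1. nra. Qed.
Lemma sq_pos : 0 <= sq.
Proof. apply sqrt_pos. Qed.
Lemma sq_bounds : a < sq /\ 2 <= sq /\ sq < a + 2.
Proof. pose proof sq_sq. pose proof sq_pos. pose proof a_ge1. repeat split; nra. Qed.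

Lemma g_def : g = (a + sq) / 2. Proof. reflexivity. Qed.
Lemma l_def : l = (a - sq) / 2. Proof. reflexivity. Qed.

Lemma gl_sum : g + l = a. Proof. rewrite g_def, l_def. field. Qed.
Lemma gl_prod : g * l = -1. Proof. rewrite g_def, l_def. pose proof sq_sq. nra. Qed.
Lemma D_eq : g - l = sq. Proof. rewrite g_def, l_def. field. Qed.
Lemma D2 : (g - l) ^ 2 = a ^ 2 + 4. Proof. rewrite D_eq. pose proof sq_sq. nra. Qed.
Lemma g_gt : 3/2 <= g. Proof. rewrite g_def. pose proof sq_bounds. pose proof a_ge1. lra. Qed.
Lemma l_bounds : -1 < l < 0. Proof. rewrite l_def. pose proof sq_bounds. lra. Qed.
Lemma g_sq : g ^ 2 = a * g + 1. Proof. pose proof gl_sum. pose proof gl_prod. replace a with (g + l) by lra. nra. Qed.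
Lemma l_sq : l ^ 2 = a * l + 1. Proof. pose proof gl_sum. pose proof gl_prod. replace a with (g + l) by lra. nra. Qed.

Lemma binet m : INR (U al m) = (g ^ m - l ^ m) / (g - l).
Proof.
  pose proof D_eq. pose proof sq_bounds.
  induction m as [m IH] using lt_wf_ind.
  destruct m as [|[|m]].
  - simpl. field. lra.
  - simpl. field. lra.
  - rewrite U_SS, plus_INR, mult_INR. fold a. rewrite (IH (S m)), (IH m) by lia.
    replace (S (S m)) with (2 + m)%nat by lia. replace (S m) with (1 + m)%nat by lia.
    rewrite !pow_add. pose proof g_sq. pose proof l_sq. field_simplify; [|lra|lra].
    replace (g ^ 2) with (a * g + 1) by lra. replace (l ^ 2) with (a * l + 1) by lra. simpl. field. lra.
Qed.

Lemma lpow_bound m : -1 <= l ^ m <= 1.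
Proof. pose proof l_bounds. induction m; simpl; [lra|]. nra. Qed.

Lemma gpow_ge1 m : 1 <= g ^ m.
Proof. pose proof g_gt. apply pow_R1_Rle. lra. Qed.

Lemma glpow m : g ^ m * l ^ m = (-1) ^ m.
Proof. rewrite <- Rpow_mult_distr, gl_prod. reflexivity. Qed.

Lemma m1pow m : (-1) ^ m = 1 \/ (-1) ^ m = -1.
Proof. induction m; simpl; [left; lra|]. destruct IHm as [-> | ->]; [right|left]; lra. Qed.

Lemma U_le_gpow m : INR (U al m) <= g ^ m.
Proof.
  rewrite binet, D_eq. pose proof sq_bounds. pose proof (lpow_bound m). pose proof (gpow_ge1 m).
  apply Rmult_le_reg_r with sq; [lra|]. unfold Rdiv. rewrite Rmult_assoc, Rinv_l; nra.
Qed.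

Lemma UU1 r : INR (U al r) * INR (U al (S r)) <= (g ^ (2 * r + 1) + a + 1) / (g - l) ^ 2.
Proof.
  rewrite !binet. pose proof D_eq. pose proof sq_bounds.
  assert (E : (g ^ r - l ^ r) / (g - l) * ((g ^ S r - l ^ S r) / (g - l)) =
     (g ^ (2 * r + 1) - (-1) ^ r * (g + l) + l ^ (2 * r + 1)) / (g - l) ^ 2).
  { rewrite <- (glpow r). replace (2 * r + 1)%nat with (r + r + 1)%nat by lia.
    rewrite !pow_add. simpl. field. lra. }
  rewrite E. apply Rmult_le_compat_r. apply Rlt_le, Rinv_0_lt_compat; nra.
  pose proof (lpow_bound (2 * r + 1)). rewrite gl_sum. destruct (m1pow r) as [-> | ->]; pose proof a_ge1; lra.
Qed.

Lemma UU2 r : (g ^ (2 * r + 2) - (a ^ 2 + 2)) / (g - l) ^ 2 <= INR (U al r) * INR (U al (S (S r))).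
Proof.
  rewrite !binet. pose proof D_eq. pose proof sq_bounds.
  assert (E : (g ^ r - l ^ r) / (g - l) * ((g ^ S (S r) - l ^ S (S r)) / (g - l)) =
     (g ^ (2 * r + 2) - (-1) ^ r * (g ^ 2 + l ^ 2) + l ^ (2 * r + 2)) / (g - l) ^ 2).
  { rewrite <- (glpow r). replace (2 * r + 2)%nat with (r + r + 2)%nat by lia.
    rewrite !pow_add. simpl. field. lra. }
  rewrite E. apply Rmult_le_compat_r. apply Rlt_le, Rinv_0_lt_compat; nra.
  assert (Hs : g ^ 2 + l ^ 2 = a ^ 2 + 2).
  { pose proof gl_sum. pose proof gl_prod. replace a with (g + l) by lra. nra. }
  rewrite Hs. assert (0 <= l ^ (2 * r + 2)).
  { replace (2 * r + 2)%nat with (2 * (r + 1))%nat by lia. rewrite pow_mult. apply pow_le. nra. }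
  pose proof a_ge1. destruct (m1pow r) as [-> | ->]; nra.
Qed.

End G.

Open Scope R_scope.
Open Scope R_scope.

Lemma step_ineq a x y : 1 <= a -> 0 <= x -> 0 <= y ->
  a/2 * (Rmax 0 (y + 1 - x))^2 - a/2 * (Rmax 0 (y - x))^2 <= Rmax 0 (a * (y + 1) - a * x) <=
  a/2 * (Rmax 0 (y + 1 - x))^2 - a/2 * (Rmax 0 (y - x))^2 + a.
Proof.
  intros Ha Hx Hy. unfold Rmax.
  destruct (Rle_dec 0 (y + 1 - x)); destruct (Rle_dec 0 (y - x)); destruct (Rle_dec 0 (a * (y + 1) - a * x));
  split; nra.
Qed.

Lemma INR_sub_max m n : INR (m - n) = Rmax 0 (INR m - INR n).
Proof.
  destruct (Nat.le_gt_cases n m).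
  - rewrite minus_INR by auto. unfold Rmax. destruct (Rle_dec 0 (INR m - INR n)); auto.
    apply le_INR in H. lra.
  - replace (m - n)%nat with 0%nat by lia. unfold Rmax. destruct (Rle_dec 0 (INR m - INR n)); auto.
    apply lt_INR in H. simpl. lra.
Qed.

Lemma Fs_bounds al P B : (1 <= al)%nat ->
  let a := INR al in let x := INR P / a in
  a/2 * (Rmax 0 (INR B - x))^2 <= INR (Fs al P B) <= a/2 * (Rmax 0 (INR B - x))^2 + a * INR B.
Proof.
  intros Hal a x. assert (Ha : 1 <= a) by (apply (le_INR 1); auto).
  assert (Hx : 0 <= x) by (unfold x, Rdiv; apply Rmult_le_pos; [apply pos_INR | apply Rlt_le, Rinv_0_lt_compat; lra]).
  induction B as [|B IH].
  - simpl. unfold Rmax. destruct (Rle_dec 0 (0 - x)); [replace (0 - x) with 0 by lra|]; split; simpl; lra.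
  - cbn [Fs]. rewrite plus_INR, INR_sub_max, mult_INR, S_INR. fold a.
    replace (INR P) with (a * x) by (unfold x; field; lra).
    pose proof (step_ineq a x (INR B) Ha Hx (pos_INR B)). lra.
Qed.

Open Scope R_scope.
Open Scope R_scope.

Lemma abs_core u v L e U0 V0 : (e = 1 \/ e = -1) -> -1 <= L <= 1 ->
  -U0 <= u <= U0 -> -V0 <= v <= V0 ->
  Rabs (-2 * e * u * v + L ^ 2 * v ^ 2) <= 2 * U0 * V0 + V0 ^ 2.
Proof.
  intros He HL Hu Hv. apply Rabs_le.
  assert (h1 : 0 <= (U0 - u) * (V0 - v)) by (apply Rmult_le_pos; lra).
  assert (h2 : 0 <= (U0 + u) * (V0 + v)) by (apply Rmult_le_pos; lra).
  assert (h3 : 0 <= (U0 - u) * (V0 + v)) by (apply Rmult_le_pos; lra).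
  assert (h4 : 0 <= (U0 + u) * (V0 - v)) by (apply Rmult_le_pos; lra).
  assert (h5 : L ^ 2 * v ^ 2 <= V0 ^ 2).
  { assert (L^2 <= 1) by nra. assert (v^2 <= V0^2) by nra. assert (0 <= v^2) by nra. nra. }
  assert (h6 : 0 <= L ^ 2 * v ^ 2) by (apply Rmult_le_pos; nra).
  destruct He as [-> | ->]; split; nra.
Qed.

Section L.
Variable al p : nat.
Hypothesis Hal : (1 <= al)%nat.
Hypothesis Hp : (1 <= p)%nat.
Let a := INR al.
Let g := gamma al.
Let l := lambda al.
Let pr := INR p.
Definition qq := / (INR al * gamma al) * INR p.
Definition K2 := (2 * (INR al * gamma al + INR p) * (INR al + INR p) + (INR al + INR p) ^ 2)
                 / (2 * INR al * (gamma al - lambda al) ^ 2).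

Lemma level_main i :
  Rabs (a / 2 * (INR (U al (S (S i))) - INR (p * U al (S i)) / a) ^ 2
        - a / 2 * (1 - qq) ^ 2 * g ^ (2 * i + 4) / (g - l) ^ 2) <= K2.
Proof.
  pose proof (a_ge1 al Hal) as Ha. fold a in Ha. pose proof (g_gt al Hal) as Hg. fold g in Hg.
  pose proof (l_bounds al Hal) as Hl. fold l in Hl. pose proof (D2 al) as HD. fold g l a in HD.
  assert (HDp : 0 < (g - l) ^ 2) by nra.
  rewrite mult_INR, !binet by auto. fold g l. unfold qq. fold a g.
  set (G := g ^ S i). set (L := l ^ S i).
  assert (EG : g ^ S (S i) = g * G) by reflexivity. assert (EL : l ^ S (S i) = l * L) by reflexivity.
  assert (EG2 : g ^ (2 * i + 4) = g ^ 2 * G ^ 2).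
  { unfold G. rewrite <- pow_mult, <- pow_add. f_equal. lia. }
  rewrite EG, EL, EG2. fold pr.
  set (u := a * g - pr). set (v := a * l - pr).
  assert (Hdiff : a / 2 * ((g * G - l * L) / (g - l) - pr * ((G - L) / (g - l)) / a) ^ 2 -
     a / 2 * (1 - / (a * g) * pr) ^ 2 * (g ^ 2 * G ^ 2) / (g - l) ^ 2 =
     (-2 * (G * L) * u * v + L ^ 2 * v ^ 2) / (2 * a * (g - l) ^ 2)).
  { unfold u, v. field. repeat split; nra. }
  rewrite Hdiff. unfold K2. fold a g l pr.
  unfold Rdiv. rewrite Rabs_mult, (Rabs_right (/ _)).
  2: { apply Rle_ge, Rlt_le, Rinv_0_lt_compat. nra. }
  apply Rmult_le_compat_r. apply Rlt_le, Rinv_0_lt_compat. nra.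
  assert (Hpr : 1 <= pr) by (apply (le_INR 1); auto).
  apply abs_core.
  - unfold G, L, g, l. rewrite glpow; auto. apply m1pow.
  - unfold L, l. apply lpow_bound; auto.
  - unfold u. split; nra.
  - unfold v. split; nra.
Qed.

End L.

Open Scope R_scope.
Open Scope R_scope.

Section T.
Variable al p : nat.
Hypothesis Hal : (1 <= al)%nat.
Hypothesis Hp : (1 <= p)%nat.
Hypothesis Hpa : (p <= al * al)%nat.
Let a := INR al.
Let g := gamma al.
Let l := lambda al.

Definition Mm n := / 2 * (1 - qq al p) ^ 2 * (gamma al ^ (2 * n + 3) - gamma al ^ 3) / (gamma al - lambda al) ^ 2.
Definition Kc := (INR al * gamma al + K2 al p) / (gamma al - 1).

Lemma K2_pos : 0 <= K2 al p.
Proof.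
  unfold K2. pose proof (a_ge1 al Hal). pose proof (g_gt al Hal). pose proof (D2 al Hal).
  pose proof (pos_INR p). apply Rmult_le_pos.
  - apply Rplus_le_le_0_compat; [repeat apply Rmult_le_pos; nra | apply pow2_ge_0].
  - apply Rlt_le, Rinv_0_lt_compat. rewrite H1. nra.
Qed.

Lemma level_full i :
  Rabs (INR (Fs al (p * U al (S i)) (U al (S (S i)))) - a / 2 * (1 - qq al p) ^ 2 * g ^ (2 * i + 4) / (g - l) ^ 2)
  <= a * g ^ (i + 2) + K2 al p.
Proof.
  pose proof (Fs_bounds al (p * U al (S i)) (U al (S (S i))) Hal) as HF. cbv zeta in HF. fold a in HF.
  pose proof (a_ge1 al Hal) as Ha. fold a in Ha.
  assert (HP : (p * U al (S i) <= al * U al (S (S i)))%nat).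
  { rewrite (U_SS al i). nia. }
  assert (Hmax : Rmax 0 (INR (U al (S (S i))) - INR (p * U al (S i)) / a) =
                 INR (U al (S (S i))) - INR (p * U al (S i)) / a).
  { apply Rmax_right. apply le_INR in HP. rewrite (mult_INR al) in HP. fold a in HP.
    assert (INR (p * U al (S i)) / a <= INR (U al (S (S i)))); [|lra].
    apply Rmult_le_reg_r with a; [lra|]. unfold Rdiv. rewrite Rmult_assoc, Rinv_l by lra. lra. }
  rewrite Hmax in HF.
  pose proof (level_main al p Hal Hp i) as HL. fold a g l in HL.
  pose proof (U_le_gpow al Hal (S (S i))) as HU. fold g in HU.
  assert (HU' : INR (U al (S (S i))) <= g ^ (i + 2)) by (replace (i+2)%nat with (S (S i)) by lia; exact HU).
  assert (HaB : a * INR (U al (S (S i))) <= a * g ^ (i + 2)) by (apply Rmult_le_compat_l; lra).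
  revert HL. unfold Rabs. destruct (Rcase_abs _); destruct (Rcase_abs _); intros; lra.
Qed.

Lemma tot_est n : Rabs (INR (Tot al p n) - Mm n) <= Kc * (g ^ (n + 1) - 1).
Proof.
  pose proof (g_gt al Hal) as Hg. fold g in Hg. pose proof (a_ge1 al Hal) as Ha. fold a in Ha.
  pose proof K2_pos as HK2.
  assert (HKc : 0 <= Kc).
  { unfold Kc. fold a g. apply Rmult_le_pos; [nra|]. apply Rlt_le, Rinv_0_lt_compat. lra. }
  induction n as [|n IH].
  - assert (H0 : Mm 0 = 0) by (unfold Mm; replace (2*0+3)%nat with 3%nat by lia; unfold Rdiv; ring).
    cbn [Tot INR]. rewrite H0, Rminus_0_r, Rabs_R0. apply Rmult_le_pos; [auto| simpl; lra].
  - cbn [Tot]. rewrite plus_INR.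
    pose proof (level_full n) as HL.
    assert (HM : Mm (S n) = Mm n + a / 2 * (1 - qq al p) ^ 2 * g ^ (2 * n + 4) / (g - l) ^ 2).
    { unfold Mm. fold a g l.
      assert (E1 : g ^ (2 * S n + 3) = g ^ (2 * n + 3) * g ^ 2) by (rewrite <- pow_add; f_equal; lia).
      assert (E2 : g ^ (2 * n + 4) = g ^ (2 * n + 3) * g) by (rewrite <- (pow_1 g) at 3; rewrite <- pow_add; f_equal; lia).
      rewrite E1, E2. pose proof (g_sq al Hal) as Hgs. fold a g in Hgs. rewrite Hgs.
      pose proof (D2 al Hal). fold g l a in H.
      field. nra. }
    rewrite HM.
    assert (Hgp : 1 <= g ^ (n + 1)) by (apply gpow_ge1; auto).
    assert (Eg : g ^ (S n + 1) = g ^ (n + 1) * g) by (rewrite <- (pow_1 g) at 3; rewrite <- pow_add; f_equal; lia).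
    assert (Eg2 : g ^ (n + 2) = g ^ (n + 1) * g) by (rewrite <- (pow_1 g) at 3; rewrite <- pow_add; f_equal; lia).
    rewrite Eg2 in HL. rewrite Eg.
    assert (HK : Kc * (g - 1) = a * g + K2 al p) by (unfold Kc; fold a g; field; lra).
    assert (Hst : Kc * (g ^ (n + 1) - 1) + (a * (g ^ (n + 1) * g) + K2 al p) <= Kc * (g ^ (n + 1) * g - 1)).
    { assert (Kc * (g ^ (n + 1) * g - 1) - Kc * (g ^ (n + 1) - 1) = Kc * (g - 1) * g ^ (n + 1)) by ring.
      rewrite HK in H. assert ((a * g + K2 al p) * g ^ (n + 1) >= a * (g ^ (n + 1) * g) + K2 al p) by nra.
      lra. }
    eapply Rle_trans; [|exact Hst].
    eapply Rle_trans; [|apply Rplus_le_compat; [exact IH|exact HL]].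
    eapply Rle_trans; [|apply Rabs_triang]. right. f_equal. ring.
Qed.
End T.

Open Scope R_scope.
Open Scope R_scope.

Lemma bern x n : 0 <= x -> 1 + INR n * x <= (1 + x) ^ n.
Proof.
  intros Hx. induction n as [|n IH]; [simpl; lra|]. rewrite S_INR. simpl pow.
  assert (0 <= INR n) by apply pos_INR. nra.
Qed.

Lemma ncr_bounds al c r : 0 <= c / (gamma al - lambda al) ^ 2 * gamma al ^ (2 * r + 1) ->
  let X := c / (gamma al - lambda al) ^ 2 * gamma al ^ (2 * r + 1) in
  X - 1 < INR (ncr al c r) <= X.
Proof.
  intros HX X. fold X in HX. unfold ncr. fold X. destruct (base_Int_part X) as [H1 H2].
  assert (Hz : (0 <= Int_part X)%Z).
  { apply le_IZR. assert (-1 < IZR (Int_part X)) by lra.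
    destruct (Z.le_gt_cases 0 (Int_part X)) as [h|h]; [apply IZR_le in h; exact h|].
    apply Z.lt_le_pred in h. apply IZR_le in h. simpl in h. lra. }
  rewrite INR_IZR_INZ, Z2Nat.id by exact Hz. lra.
Qed.

Lemma Fs_last al P B : (1 <= B)%nat -> (Fs al P B <= Fs al P (B - 1) + al * B)%nat.
Proof. intros HB. destruct B as [|B]; [lia|]. cbn [Fs]. replace (S B - 1)%nat with B by lia. lia. Qed.

Lemma part1 (al p : nat) (c : R) :
  (1 <= al)%nat -> (1 <= p)%nat -> (p <= al * al)%nat ->
  1 <= c -> c <= INR p * gamma al / INR al ->
  exists C : R, exists r0 : nat, forall r : nat, (r0 <= r)%nat ->
    Rabs (INR (count_Sp al p (ncr al c r)) / INR (ncr al c r)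
          - / 2 * / c * (1 - / (INR al * gamma al) * INR p) ^ 2)
    <= C * / gamma al ^ r.
Proof.
  intros Hal Hp Hpa Hc1 Hc2.
  set (a := INR al). set (g := gamma al). set (l := lambda al).
  pose proof (a_ge1 al Hal) as Ha. fold a in Ha.
  pose proof (g_gt al Hal) as Hg. fold g in Hg.
  pose proof (D2 al Hal) as HD. fold g l a in HD.
  set (D := (g - l) ^ 2) in *.
  assert (HDp : 4 <= D) by nra.
  pose proof (pos_INR p) as Hp0. assert (Hp1 : 1 <= INR p) by (apply (le_INR 1); auto).
  set (t := / 2 * / c * (1 - / (a * g) * INR p) ^ 2).
  assert (Ht : 0 <= t) by (unfold t; apply Rmult_le_pos; [apply Rmult_le_pos; apply Rlt_le, Rinv_0_lt_compat; lra|apply pow2_ge_0]).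
  set (Q3 := / 2 * (1 - qq al p) ^ 2 * g ^ 3 / D).
  assert (HQ3 : 0 <= Q3).
  { unfold Q3, Rdiv. apply Rmult_le_pos; [|apply Rlt_le, Rinv_0_lt_compat; lra].
    apply Rmult_le_pos; [apply Rmult_le_pos; [lra|apply pow2_ge_0]|]. apply pow_le. lra. }
  assert (HKc : 0 <= Kc al p).
  { unfold Kc. fold a g. pose proof (K2_pos al p Hal). apply Rmult_le_pos; [nra|]. apply Rlt_le, Rinv_0_lt_compat. lra. }
  set (C0 := 2 * a + Kc al p + Q3 + t).
  exists (C0 * D), (4 * al * al + 2 * p + 20)%nat.
  intros r Hr.
  destruct (Nat.le_exists_sub 2 r ltac:(lia)) as [s [Hs _]]. 
  assert (Hrs : r = (s + 2)%nat) by lia. clear Hs.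
  assert (Hgr : 1 <= g ^ r) by (apply gpow_ge1; auto).
  set (X := c / D * g ^ (2 * r + 1)).
  assert (HX0 : 0 <= X).
  { unfold X, Rdiv. apply Rmult_le_pos; [apply Rmult_le_pos; [lra|apply Rlt_le, Rinv_0_lt_compat; lra]|].
    apply pow_le; lra. }
  pose proof (ncr_bounds al c r HX0) as HN. cbv zeta in HN. fold g l D X in HN.
  set (N := ncr al c r) in *.
  assert (Hg2r : g ^ (2 * r + 1) = g ^ r * g ^ r * g).
  { rewrite <- (pow_1 g) at 4. rewrite <- !pow_add. f_equal. lia. }
  assert (Hbig : g ^ r * g ^ r / D <= X - 1).
  { assert (Hb : 1 + INR r * (g - 1) <= g ^ r).
    { replace g with (1 + (g - 1)) at 2 by ring. apply bern. lra. }
    assert (HrI : 4 * a * a + 16 <= INR r).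
    { apply le_INR in Hr. rewrite !plus_INR, !mult_INR in Hr. simpl INR in Hr. fold a in Hr. nra. }
    assert (Hgg : D <= g ^ r * (g - 1)) by nra.
    unfold X. rewrite Hg2r.
    assert (c / D * (g ^ r * g ^ r * g) - g ^ r * g ^ r / D = ((c * g - 1) * (g ^ r * g ^ r)) / D) by (field; lra).
    assert (1 <= (c * g - 1) * (g ^ r * g ^ r) / D); [|lra].
    apply Rmult_le_reg_r with D; [lra|]. unfold Rdiv. rewrite Rmult_assoc, Rinv_l, Rmult_1_r by lra.
    assert (g ^ r * (g - 1) <= g ^ r * g ^ r * (g - 1)) by nra.
    assert (g - 1 <= c * g - 1) by nra. nra. }
  assert (HNpos : 0 < INR N).
  { assert (0 < g ^ r * g ^ r / D) by (unfold Rdiv; apply Rmult_lt_0_compat; [nra|apply Rinv_0_lt_compat; lra]). lra. }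
  assert (HU2 : (2 <= U al (s + 2))%nat) by (pose proof (U_ge al (s + 1) Hal); replace (S (s+1)) with (s+2)%nat in H by lia; lia).
  assert (HU3 : (2 <= U al (s + 3))%nat) by (pose proof (U_ge al (s + 2) Hal); replace (S (s+2)) with (s+3)%nat in H by lia; lia).
  assert (HU4 : (p <= U al (s + 4))%nat) by (pose proof (U_ge al (s + 3) Hal); replace (S (s+3)) with (s+4)%nat in H by lia; lia).
  assert (Hhi_real : (al * N < (p * U al r + 1) * U al (S (S r)))%nat).
  { apply INR_lt. rewrite !mult_INR, plus_INR, mult_INR. fold a. simpl INR at 2.
    pose proof (UU2 al Hal r) as H2. fold g l a D in H2.
    assert (HacX : a * X <= INR p * g ^ (2 * r + 2) / D).
    { unfold X. assert (a * c <= INR p * g).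
      { apply Rmult_le_reg_r with (/ a). apply Rinv_0_lt_compat; lra.
        replace (a * c * / a) with c by (field; lra). unfold Rdiv in Hc2. fold a g in Hc2. lra. }
      replace (g ^ (2 * r + 2)) with (g * g ^ (2 * r + 1)) by (replace (2 * r + 2)%nat with (S (2 * r + 1)) by lia; reflexivity).
      assert (0 <= g ^ (2 * r + 1) / D) by (unfold Rdiv; apply Rmult_le_pos; [apply pow_le; lra|apply Rlt_le, Rinv_0_lt_compat; lra]).
      assert (E1 : a * (c / D * g ^ (2 * r + 1)) = (a * c) * (g ^ (2 * r + 1) / D)) by (field; lra).
      assert (E2 : INR p * (g * g ^ (2 * r + 1)) / D = (INR p * g) * (g ^ (2 * r + 1) / D)) by (field; lra).
      rewrite E1, E2. apply Rmult_le_compat_r; auto. }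
    assert (HUr2 : INR p <= INR (U al (S (S r)))) by (apply le_INR; rewrite Hrs; replace (S (S (s+2))) with (s+4)%nat by lia; auto).
    assert (HpD : INR p * (a ^ 2 + 2) / D < INR p) by (apply Rmult_lt_reg_r with D; [lra|]; unfold Rdiv; rewrite Rmult_assoc, Rinv_l by lra; nra).
    assert (a * INR N <= a * X) by (apply Rmult_le_compat_l; lra).
    assert (INR p * ((g ^ (2 * r + 2) - (a ^ 2 + 2)) / D) <= INR p * (INR (U al r) * INR (U al (S (S r))))) by (apply Rmult_le_compat_l; lra).
    assert (INR p * ((g ^ (2 * r + 2) - (a ^ 2 + 2)) / D) = INR p * g ^ (2 * r + 2) / D - INR p * (a ^ 2 + 2) / D) by (field; lra).
    replace (INR 1) with 1 by reflexivity. rewrite Rmult_plus_distr_r, Rmult_1_l, Rmult_assoc. lra. }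
  assert (Hhi : forall i a0 b0, Tri al p i a0 b0 -> (s < i)%nat -> (N < val al i a0 b0)%nat).
  { intros i a0 b0 [Ha0 Hb0] Hi.
    assert (HA : (U al r <= U al (S i))%nat) by (apply U_mono; auto; lia).
    assert (HC : (U al (S (S r)) <= U al (S (S (S i))))%nat) by (apply U_mono; auto; lia).
    assert (Hv : (b0 * U al (S (S (S i))) <= al * val al i a0 b0)%nat).
    { unfold val. rewrite (U_SS al (S i)). nia. }
    assert (Hb1 : (p * U al r + 1 <= b0)%nat) by nia.
    assert ((p * U al r + 1) * U al (S (S r)) <= b0 * U al (S (S (S i))))%nat by (apply Nat.mul_le_mono; auto).
    assert (al * N < al * val al i a0 b0)%nat by lia.
    apply Nat.mul_lt_mono_pos_l in H0; lia. }
  assert (Hlo_real : (U al r * U al (S r) < N + U al (S r))%nat).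
  { apply INR_lt. rewrite mult_INR, plus_INR.
    pose proof (UU1 al Hal r) as H1. fold g l a D in H1.
    assert (HU1 : 2 <= INR (U al (S r))) by (apply (le_INR 2); rewrite Hrs; replace (S (s+2)) with (s+3)%nat by lia; auto).
    assert (HX1 : g ^ (2 * r + 1) / D <= X).
    { assert (EX : X = c * (g ^ (2 * r + 1) / D)) by (unfold X; field; lra).
      assert (0 <= g ^ (2 * r + 1) / D) by (unfold Rdiv; apply Rmult_le_pos; [apply pow_le; lra|apply Rlt_le, Rinv_0_lt_compat; lra]).
      rewrite EX. nra. }
    assert ((g ^ (2 * r + 1) + a + 1) / D = g ^ (2 * r + 1) / D + (a + 1) / D) by (field; lra).
    assert ((a + 1) / D < 1) by (apply Rmult_lt_reg_r with D; [lra|]; unfold Rdiv; rewrite Rmult_assoc, Rinv_l by lra; nra).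
    lra. }
  assert (Hlo : forall i a0 b0, Tri al p i a0 b0 -> ((i < s)%nat \/ (i = s /\ a0 < U al (S (S s)))%nat) -> (val al i a0 b0 <= N)%nat).
  { intros i a0 b0 [Ha0 Hb0] Hi.
    assert (Hv : (val al i a0 b0 <= a0 * U al (S (S (S i))))%nat).
    { unfold val. rewrite (U_SS al (S i)). nia. }
    assert (Hkey : ((U al r - 1) * U al (S r) <= N)%nat).
    { rewrite Nat.mul_sub_distr_r. lia. }
    rewrite Hrs in Hkey. replace (S (s + 2)) with (S (S (S s))) in Hkey by lia.
    replace (s + 2)%nat with (S (S s)) in Hkey by lia.
    destruct Hi as [Hi|[-> Hi]].
    - assert (HA : (U al (S (S i)) <= U al (S s))%nat) by (apply U_mono; auto; lia).
      assert (HC : (U al (S (S (S i))) <= U al (S (S s)))%nat) by (apply U_mono; auto; lia).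
      assert (Hm : (U al (S s) * U al (S (S s)) <= (U al (S (S s)) - 1) * U al (S (S (S s))))%nat).
      { rewrite (U_SS al (S s)). pose proof (U_mono al (S s) (S (S s)) Hal ltac:(lia)).
        replace (s + 2)%nat with (S (S s)) in HU2 by lia. nia. }
      nia.
    - nia. }
  assert (HalN : (al <= N)%nat).
  { assert (Hkey : ((U al r - 1) * U al (S r) <= N)%nat) by (rewrite Nat.mul_sub_distr_r; lia).
    assert (U al (S r) >= al * U al r)%nat.
    { destruct r as [|r']; [lia|]. rewrite U_SS. lia. }
    rewrite Hrs in *. nia. }
  pose proof (count_upper al p N s Hal Hhi) as Cup.
  pose proof (count_lower al p N s Hal HalN Hlo) as Clo.
  pose proof (Fs_last al (p * U al (S s)) (U al (S (S s))) ltac:(replace (S (S s)) with (s+2)%nat by lia; lia)) as Hlast.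
  cbn [Tot] in Cup.
  set (cnt := count_Sp al p N) in *.
  set (T := Tot al p (S s)).
  assert (HT : (Tot al p (S s) = Tot al p s + Fs al (p * U al (S s)) (U al (S (S s))))%nat) by reflexivity.
  assert (Cr1 : INR cnt <= a + INR T).
  { unfold a, T. rewrite <- plus_INR. apply le_INR. rewrite HT. lia. }
  assert (Cr2 : a + INR T - a * INR (U al r) <= INR cnt).
  { assert (Hn : (al + T <= cnt + al * U al r)%nat).
    { unfold T. rewrite HT. rewrite Hrs. replace (s + 2)%nat with (S (S s)) by lia. lia. }
    apply le_INR in Hn. rewrite !plus_INR, mult_INR in Hn. fold a in Hn. lra. }
  pose proof (tot_est al p Hal Hp Hpa (S s)) as HTe. fold g in HTe. fold T in HTe.
  assert (HTe2 : Rabs (INR T - Mm al p (S s)) <= Kc al p * g ^ r).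
  { eapply Rle_trans; [exact HTe|]. rewrite Hrs. replace (S s + 1)%nat with (s + 2)%nat by lia.
    apply Rmult_le_compat_l; auto. lra. }
  assert (HM : Mm al p (S s) = t * X - Q3).
  { unfold Mm, t, X, Q3, qq. fold a g l D. rewrite Hrs. replace (2 * S s + 3)%nat with (2 * (s + 2) + 1)%nat by lia.
    field. repeat split; lra. }
  assert (HUr : INR (U al r) <= g ^ r) by (apply U_le_gpow; auto).
  assert (Hmain : Rabs (INR cnt - t * INR N) <= C0 * g ^ r).
  { rewrite HM in HTe2. apply Rabs_le. apply Rabs_le_between in HTe2 || apply Rabs_le in HTe2 || idtac.
    destruct (Rabs_def2b _ _ HTe2) as [_ _] || idtac.
    assert (HaU : a * INR (U al r) <= a * g ^ r) by (apply Rmult_le_compat_l; lra).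
    assert (Htx : 0 <= t * (X - INR N) <= t) by (split; apply Rmult_le_pos || nra; nra).
    unfold Rabs in HTe2. destruct (Rcase_abs _) in HTe2; unfold C0; split; nra. }
  assert (E : INR cnt / INR N - t = (INR cnt - t * INR N) / INR N) by (field; lra).
  rewrite E. unfold Rdiv. rewrite Rabs_mult, (Rabs_right (/ INR N)) by (apply Rle_ge, Rlt_le, Rinv_0_lt_compat; lra).
  assert (HinvN : / INR N <= D / (g ^ r * g ^ r)).
  { replace (D / (g ^ r * g ^ r)) with (/ (g ^ r * g ^ r / D)) by (field; split; nra).
    apply Rinv_le_contravar; [unfold Rdiv; apply Rmult_lt_0_compat; [nra|apply Rinv_0_lt_compat; lra]|lra]. }
  assert (C0 * g ^ r * (D / (g ^ r * g ^ r)) = C0 * D * / g ^ r) by (field; lra).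
  assert (0 <= C0) by (unfold C0; lra).
  eapply Rle_trans. apply Rmult_le_compat; [apply Rabs_pos|apply Rlt_le, Rinv_0_lt_compat; lra|exact Hmain|exact HinvN].
  lra.
Qed.

Open Scope R_scope.
Open Scope R_scope.

Theorem corollary1p5 :
  (forall (alpha p : nat) (c : R),
      (1 <= alpha)%nat -> (1 <= p)%nat -> (p <= alpha * alpha)%nat ->
      1 <= c -> c <= INR p * gamma alpha / INR alpha ->
      exists C : R, exists r0 : nat, forall r : nat, (r0 <= r)%nat ->
        Rabs (INR (count_Sp alpha p (ncr alpha c r)) / INR (ncr alpha c r)
              - / 2 * / c * (1 - / (INR alpha * gamma alpha) * INR p) ^ 2)
        <= C * / gamma alpha ^ r)
  /\
  (forall (alpha : nat) (c : R),
      (1 <= alpha)%nat ->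
      1 <= c -> c <= INR alpha * gamma alpha ->
      exists C : R, exists r0 : nat, forall r : nat, (r0 <= r)%nat ->
        Rabs (INR (count_Sp alpha (alpha * alpha) (ncr alpha c r))
                / INR (ncr alpha c r)
              - / 2 * / c * / gamma alpha ^ 4)
        <= C * / gamma alpha ^ r).
Proof.
  split.
  - exact part1.
  - intros al c Hal Hc1 Hc2.
    pose proof (a_ge1 al Hal) as Ha. pose proof (g_gt al Hal) as Hg.
    destruct (part1 al (al * al) c Hal ltac:(nia) ltac:(lia) Hc1) as [C [r0 H]].
    { rewrite mult_INR. replace (INR al * INR al * gamma al / INR al) with (INR al * gamma al) by (field; lra). exact Hc2. }
    exists C, r0. intros r Hr. specialize (H r Hr).
    assert (E : (1 - / (INR al * gamma al) * INR (al * al)) ^ 2 = / gamma al ^ 4).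
    { rewrite mult_INR. pose proof (gl_sum al) as S1. pose proof (gl_prod al Hal) as P1.
      assert (Hl : lambda al = - / gamma al) by (field_simplify_eq; lra).
      assert (1 - / (INR al * gamma al) * (INR al * INR al) = / gamma al ^ 2).
      { rewrite <- S1, Hl. field. repeat split; nra. }
      rewrite H0. field. lra. }
    rewrite E in H. exact H.
Qed.

Open Scope R_scope.
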